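(* Let $f,g\in\mathbb{H}$ be two linearly independent pure unit quaternions ($f^2=g^2=-1$, $f\neq\pm g$). Let $h\in L^1(\mathbb{R}^2,\mathbb{H})$, and let $h_{\pm}(\mathbf{x})=\frac12\big(h(\mathbf{x})\pm f\,h(\mathbf{x})\,g\big)$. Define $$\mathcal{F}^{g,f}_{c,\pm}\{h\}(\boldsymbol{\omega})=\int_{\mathbb{R}^2} e^{-g x_1\omega_1}\,\widetilde{h_{\pm}(\mathbf{x})}\,e^{-f x_2\omega_2}\,d^2\mathbf{x}.$$ Then $$\mathcal{F}^{g,f}_{c,\pm}\{h\}(\boldsymbol{\omega})=\int_{\mathbb{R}^2}\widetilde{h_{\pm}(\mathbf{x})}\,e^{-f(x_2\omega_2\mp x_1\omega_1)}\,d^2\mathbf{x}=\int_{\mathbb{R}^2}e^{-g(x_1\omega_1\mp x_2\omega_2)}\,\widetilde{h_{\pm}(\mathbf{x})}\,d^2\mathbf{x}.$$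
   Context: $\mathbb{H}$ is the real quaternion algebra, $i^2=j^2=k^2=ijk=-1$. For $q=q_r+q_ii+q_jj+q_kk$, the quaternion conjugate is $\tilde q=q_r-q_ii-q_jj-q_kk$. A pure unit quaternion $f$ satisfies $f^2=-1$, and $e^{\alpha f}=\cos\alpha+f\sin\alpha$. $d^2\mathbf{x}=dx_1dx_2$, $\mathbf{x},\boldsymbol{\omega}\in\mathbb{R}^2$. *)

(* Defs.v *)
From HB Require Import structures.
From mathcomp Require Import all_boot all_order all_algebra.
From mathcomp Require Import all_classical all_reals all_analysis.
Set Implicit Arguments. Unset Strict Implicit. Unset Printing Implicit Defensive.
Import Order.TTheory GRing.Theory Num.Theory.
Local Open Scope ring_scope.

(* q = qr + qi i + qj j + qk k *)
Record quat (R : Type) := Quat { qr : R; qi : R; qj : R; qk : R }.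

Section Quat.
Variable R : realType.

Definition qadd (p q : quat R) : quat R :=
  Quat (qr p + qr q) (qi p + qi q) (qj p + qj q) (qk p + qk q).
Definition qopp (p : quat R) : quat R := Quat (- qr p) (- qi p) (- qj p) (- qk p).
Definition qscale (a : R) (p : quat R) : quat R :=
  Quat (a * qr p) (a * qi p) (a * qj p) (a * qk p).
(* Hamilton product, i^2 = j^2 = k^2 = ijk = -1 *)
Definition qmul (p q : quat R) : quat R :=
  Quat (qr p * qr q - qi p * qi q - qj p * qj q - qk p * qk q)
       (qr p * qi q + qi p * qr q + qj p * qk q - qk p * qj q)
       (qr p * qj q - qi p * qk q + qj p * qr q + qk p * qi q)
       (qr p * qk q + qi p * qj q - qj p * qi q + qk p * qr q).
Definition qone : quat R := Quat 1 0 0 0.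
Definition qconj (p : quat R) : quat R := Quat (qr p) (- qi p) (- qj p) (- qk p).
Definition qreal (a : R) : quat R := Quat a 0 0 0.

Definition pure_unit (f : quat R) : Prop :=
  qr f = 0 /\ qmul f f = qopp qone.

Definition qexp (f : quat R) (a : R) : quat R :=
  qadd (qreal (cos a)) (qscale (sin a) f).

Definition leb2 := ((@lebesgue_measure R) \x (@lebesgue_measure R))%E.

Definition qintegrable (h : R * R -> quat R) : Prop :=
  [/\ leb2.-integrable setT (fun x => (qr (h x))%:E),
      leb2.-integrable setT (fun x => (qi (h x))%:E),
      leb2.-integrable setT (fun x => (qj (h x))%:E) &
      leb2.-integrable setT (fun x => (qk (h x))%:E)].

Definition qintegral (h : R * R -> quat R) : quat R :=
  Quat (Rintegral leb2 setT (fun x => qr (h x)))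
       (Rintegral leb2 setT (fun x => qi (h x)))
       (Rintegral leb2 setT (fun x => qj (h x)))
       (Rintegral leb2 setT (fun x => qk (h x))).

(* h_s(x) = 1/2 (h(x) + s f h(x) g), s = +1 or -1 *)
Definition hpm (f g : quat R) (s : R) (h : R * R -> quat R) (x : R * R) : quat R :=
  qscale (2^-1) (qadd (h x) (qscale s (qmul f (qmul (h x) g)))).

Definition Fc (f g : quat R) (s : R) (h : R * R -> quat R) (w : R * R) : quat R :=
  qintegral (fun x => qmul (qexp g (- (x.1 * w.1)))
                      (qmul (qconj (hpm f g s h x)) (qexp f (- (x.2 * w.2))))).
End Quat.

(* Main.v *)
Require Import Defs.
From mathcomp Require Import all_boot all_order all_algebra.
From mathcomp Require Import all_classical all_reals all_analysis.
From mathcomp Require Import ring.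
Import GRing.Theory Num.Theory.
Local Open Scope ring_scope.

Lemma qext (R : Type) (a b c d a' b' c' d' : R) :
  a = a' -> b = b' -> c = c' -> d = d' -> Quat a b c d = Quat a' b' c' d'.
Proof. by move=> -> -> -> ->. Qed.

Ltac qsolve := cbv beta iota delta [qmul qadd qscale qconj qreal qopp qone qr qi qj qk];
  apply: qext; ring.

Section S.
Variable R : realType.
Implicit Types p q f g E : quat R.

Lemma Kg f g (hx : quat R) s : qr f = 0 -> qr g = 0 ->
  qmul g (qconj (qscale (2^-1) (qadd hx (qscale s (qmul f (qmul hx g)))))) =
  qscale (2^-1) (qadd (qmul g (qconj hx)) (qscale s (qmul (qmul g g) (qmul (qconj hx) f)))).
Proof. case: f => a b c d; case: g => a1 b1 c1 d1; case: hx => ? ? ? ?; move=> /= Ha Hb; subst; qsolve. Qed.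

Lemma Kf f g (hx : quat R) s : qr f = 0 -> qr g = 0 ->
  qmul (qconj (qscale (2^-1) (qadd hx (qscale s (qmul f (qmul hx g)))))) f =
  qscale (2^-1) (qadd (qmul (qconj hx) f) (qscale s (qmul g (qmul (qconj hx) (qmul f f))))).
Proof. case: f => a b c d; case: g => a1 b1 c1 d1; case: hx => ? ? ? ?; move=> /= Ha Hb; subst; qsolve. Qed.

Lemma K f g (hx : quat R) s : pure_unit f -> pure_unit g -> (s = 1 \/ s = -1) ->
  qmul g (qconj (qscale (2^-1) (qadd hx (qscale s (qmul f (qmul hx g)))))) =
  qscale (- s) (qmul (qconj (qscale (2^-1) (qadd hx (qscale s (qmul f (qmul hx g)))))) f).
Proof.
move=> [f0 ff] [g0 gg] hs.
rewrite Kg // Kf // ff gg.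
case: hs => ->; move: (qconj hx) => c; case: c => ????; case: g {gg g0} => ????; case: f {ff f0} => ????; qsolve.
Qed.

Lemma A1 g q E ca sa :
  qmul (qadd (qreal ca) (qscale (- sa) g)) (qmul q E) =
  qadd (qscale ca (qmul q E)) (qscale (- sa) (qmul (qmul g q) E)).
Proof. case: g => ????; case: q => ????; case: E => ????; qsolve. Qed.

Lemma A2 t q f cb sb :
  qmul (qscale t (qmul q f)) (qadd (qreal cb) (qscale (- sb) f)) =
  qscale t (qadd (qscale cb (qmul q f)) (qscale (- sb) (qmul q (qmul f f)))).
Proof. case: f => ????; case: q => ????; qsolve. Qed.

Lemma A3 q f cb sb :
  qmul q (qadd (qreal cb) (qscale (- sb) f)) =
  qadd (qscale cb q) (qscale (- sb) (qmul q f)).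
Proof. case: f => ????; case: q => ????; qsolve. Qed.

Lemma A4 g q ca sa cb sb t :
  qmul (qadd (qreal ca) (qscale (- sa) g)) (qadd (qscale cb q) (qscale (- sb) (qscale t (qmul g q)))) =
  qadd (qadd (qscale (ca * cb) q) (qscale (- sa * cb) (qmul g q)))
    (qadd (qscale (- sb * t * ca) (qmul g q)) (qscale (sa * sb * t) (qmul (qmul g g) q))).
Proof. case: g => ????; case: q => ????; qsolve. Qed.

Lemma P f g q s (a b : R) :
  qmul g q = qscale (- s) (qmul q f) -> qmul f f = qopp (qone R) -> qmul g g = qopp (qone R) ->
  (s = 1 \/ s = -1) ->
  qmul (qexp g (- a)) (qmul q (qexp f (- b))) = qmul q (qexp f (- (b - s * a))) /\
  qmul (qexp g (- a)) (qmul q (qexp f (- b))) = qmul (qexp g (- (a - s * b))) q.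
Proof.
move=> Kq ff gg hs.
have Kq' : qmul q f = qscale (- s) (qmul g q).
  rewrite Kq; case: hs => ->; case: q {Kq} => ????; case: f {ff} => ????; qsolve.
rewrite /qexp !cosN !sinN !cosB !sinB.
split.
- rewrite A1 Kq A2 ff.
  case: hs => ->; rewrite ?mul1r ?mulN1r ?cosN ?sinN; case: q {Kq Kq'} => ????; case: f {ff} => ????; qsolve.
- rewrite A3 Kq' A4 gg.
  case: hs => ->; rewrite ?mul1r ?mulN1r ?cosN ?sinN; case: q {Kq Kq'} => ????; case: g {gg} => ????; qsolve.
Qed.
End S.

Theorem theorem3 (R : realType) (f g : quat R) (h : R * R -> quat R) (s : R) :
  pure_unit f -> pure_unit g -> f <> g -> f <> qopp g ->
  qintegrable h -> (s = 1 \/ s = -1) ->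
  forall w : R * R,
    Fc f g s h w =
      qintegral (fun x => qmul (qconj (hpm f g s h x))
                               (qexp f (- (x.2 * w.2 - s * (x.1 * w.1))))) /\
    Fc f g s h w =
      qintegral (fun x => qmul (qexp g (- (x.1 * w.1 - s * (x.2 * w.2))))
                               (qconj (hpm f g s h x))).
Proof.
move=> pf pg _ _ _ hs w.
have HP x := @P R f g _ s (x.1 * w.1) (x.2 * w.2) (@K R f g (h x) s pf pg hs) (proj2 pf) (proj2 pg) hs.
rewrite /Fc; split; congr qintegral; apply: funext => x; [exact: (HP x).1 | exact: (HP x).2].
Qed.
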